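(* Let $z_1,z_2,z_3\in\mathbb{C}$ be such that $0<|z_1|\le |z_2|\le |z_3|$. Then \[ |z_1+z_2+z_3| + \left(3-\left|\frac{z_1}{|z_1|}+\frac{z_2}{|z_2|}+\frac{z_3}{|z_3|}\right|\right)|z_1| \le |z_1|+|z_2|+|z_3|. \] *)

(* Defs.v *)
From mathcomp Require Import all_boot all_order all_algebra.
From mathcomp Require Export complex.
From mathcomp Require Import reals.

(* Main.v *)
Require Import Defs.
From mathcomp Require Import all_boot all_order all_algebra.
From mathcomp Require Import complex reals.
From mathcomp Require Import ring.
Import Order.TTheory GRing.Theory Num.Theory.
Local Open Scope ring_scope.
Local Open Scope complex_scope.

Lemma unit_norm {R : realType} (z : R[i]) : 0 < `|z| -> `|z / `|z| | = 1.
Proof.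
move=> h; rewrite normf_div normr_id divff //; exact: lt0r_neq0.
Qed.

Lemma decomp {R : realType} (z : R[i]) : 0 < `|z| -> z = `|z| * (z / `|z|).
Proof.
move=> h; rewrite mulrC divfK //; exact: lt0r_neq0.
Qed.

Theorem mainTheorem2 (R : realType) (z1 z2 z3 : R[i])
  (h0 : 0 < `|z1|) (h12 : `|z1| <= `|z2|) (h23 : `|z2| <= `|z3|) :
  `|z1 + z2 + z3| + (3 - `|z1 / `|z1| + z2 / `|z2| + z3 / `|z3| |) * `|z1|
    <= `|z1| + `|z2| + `|z3|.
Proof.
have h2 : 0 < `|z2| by exact: lt_le_trans h12.
have h3 : 0 < `|z3| by exact: lt_le_trans h23.
have n2 := unit_norm _ h2; have n3 := unit_norm _ h3.
have e1 := decomp _ h0; have e2 := decomp _ h2; have e3 := decomp _ h3.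
set a1 := `|z1| in h0 h12 e1 *; set a2 := `|z2| in h12 h23 h2 e2 n2 *.
set a3 := `|z3| in h23 h3 e3 n3 *.
set u1 := z1 / a1 in e1 *; set u2 := z2 / a2 in e2 n2 *; set u3 := z3 / a3 in e3 n3 *.
have E : z1 + z2 + z3 = a1 * (u1 + u2 + u3) + (a2 - a1) * u2 + (a3 - a1) * u3.
  by rewrite {1}e1 {1}e2 {1}e3; ring.
have H : `|z1 + z2 + z3| <= a1 * `|u1 + u2 + u3| + (a2 - a1) + (a3 - a1).
  rewrite E; apply: le_trans (ler_normD _ _) _; apply: lerD; last first.
    by rewrite normrM n3 mulr1 ger0_norm // subr_ge0 (le_trans h12).
  apply: le_trans (ler_normD _ _) _; apply: lerD.
    by rewrite normrM normr_id.
  by rewrite normrM n2 mulr1 ger0_norm // subr_ge0.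
set N := `|u1 + u2 + u3| in H *.
set M := `|z1 + z2 + z3| in H *.
rewrite -lerBrDr.
have -> : a1 + a2 + a3 - (3 - N) * a1 = a1 * N + (a2 - a1) + (a3 - a1) by ring.
exact: H.
Qed.
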